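(* Let $G$ be a finite group and $U,V\leq G\times G$ with $\Delta(G)\leq U$ and $\Delta(G)\leq V$. Then $$\frac{k_1((U\ast V)')}{k_1(U)\cap k_1((U\ast V)')}\cong\frac{k_1(V')}{k_2(U)\cap k_1(V')}$$ and $$\frac{k_2((U\ast V)')}{k_2(V)\cap k_2((U\ast V)')}\cong\frac{k_2(U')}{k_1(V)\cap k_2(U')}.$$
   Context: $\Delta(G)=\{(g,g):g\in G\}$. For $W\leq G\times G$: $p_1(W)=\{g:\exists h,(g,h)\in W\}$, $p_2(W)=\{h:\exists g,(g,h)\in W\}$, $k_1(W)=\{g:(g,1)\in W\}$, $k_2(W)=\{h:(1,h)\in W\}$; $W'$ is the commutator subgroup of $W$. The $\ast$-product is $U\ast V=\{(u,v)\in p_1(U)\times p_2(V):\exists x\in p_2(U)\cap p_1(V),\ (u,x)\in U,\ (x,v)\in V\}$. *)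

(* Defs.v *)
From mathcomp Require Import all_boot all_fingroup all_solvable.
Set Implicit Arguments. Unset Strict Implicit. Unset Printing Implicit Defensive.
Local Open Scope group_scope.

Section BisetDefs.
Variable gT : finGroupType.
Implicit Types (G : {set gT}) (W U V : {set gT * gT}).

Definition diag G : {set gT * gT} := [set (g, g) | g in G].
Definition p1 W : {set gT} := [set g | [exists h, (g, h) \in W]].
Definition p2 W : {set gT} := [set h | [exists g, (g, h) \in W]].
Definition k1 W : {set gT} := [set g | (g, 1) \in W].
Definition k2 W : {set gT} := [set h | (1, h) \in W].
Definition astp U V : {set gT * gT} :=
  [set uv | [&& uv.1 \in p1 U, uv.2 \in p2 V &
     [exists x, [&& x \in p2 U :&: p1 V, (uv.1, x) \in U & (x, uv.2) \in V]]]].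
End BisetDefs.

(* Main.v *)
Require Import Defs.
From mathcomp Require Import all_boot all_fingroup all_solvable.
Set Implicit Arguments. Unset Strict Implicit. Unset Printing Implicit Defensive.
Local Open Scope group_scope.

Section Aux.
Variable gT : finGroupType.
Implicit Types (G H N M : {group gT}).

Lemma pairM (a b c d : gT) : ((a, b) * (c, d) : gT * gT) = (a * c, b * d). Proof. by []. Qed.
Lemma pairV (a b : gT) : ((a, b)^-1 : gT * gT) = (a^-1, b^-1). Proof. by []. Qed.
Lemma pair1 : (1 : gT * gT) = (1, 1). Proof. by []. Qed.
Lemma pairJ (a b c d : gT) : ((a, b) ^ (c, d) : gT * gT) = (a ^ c, b ^ d). Proof. by []. Qed.
Lemma pairR (a b c d : gT) : ([~ (a, b), (c, d)] : gT * gT) = ([~ a, c], [~ b, d]). Proof. by []. Qed.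

Fact k1_group_set (W : {group gT * gT}) : group_set (k1 W).
Proof.
apply/group_setP; split; first by rewrite inE group1.
by move=> x y; rewrite !inE => Hx Hy; have := groupM Hx Hy; rewrite pairM mulg1.
Qed.
Canonical k1_group (W : {group gT * gT}) := Group (k1_group_set W).

Fact k2_group_set (W : {group gT * gT}) : group_set (k2 W).
Proof.
apply/group_setP; split; first by rewrite inE group1.
by move=> x y; rewrite !inE => Hx Hy; have := groupM Hx Hy; rewrite pairM mulg1.
Qed.
Canonical k2_group (W : {group gT * gT}) := Group (k2_group_set W).

Definition fib (G H : {set gT}) : {set gT * gT} :=
  [set w | [&& w.1 \in G, w.2 \in G & w.1 * w.2^-1 \in H]].

Lemma fib_group_set G H : G \subset 'N(H) -> group_set (fib G H).
Proof.
move=> nHG; apply/group_setP; split.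
  rewrite /fib inE pair1 /=. rewrite !group1 /=. rewrite invg1 mulg1. by [].
move=> [a b] [c d]; rewrite /fib !inE pairM /= => /and3P[Ga Gb Hab] /and3P[Gc Gd Hcd].
rewrite !(groupM Ga, groupM Gb) //=.
have -> : a * c * (b * d)^-1 = (a * b^-1) * (c * d^-1) ^ b^-1.
  by rewrite /conjg invgK invMg !mulgA mulgKV.

by rewrite groupM // memJ_norm // (subsetP nHG) // groupV.
Qed.

Lemma k1_fib G H : H \subset G -> k1 (fib G H) = H.
Proof.
move=> sHG; apply/setP=> g; rewrite /k1 /fib !inE /= group1 invg1 mulg1.
by apply/and3P/idP => [[]//|Hg]; split => //; apply: (subsetP sHG).
Qed.

Lemma k2_fib G H : H \subset G -> k2 (fib G H) = H.
Proof.
move=> sHG; apply/setP=> g; rewrite /k2 /fib !inE /= group1 mul1g groupV.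
by apply/and3P/idP => [[]//|Hg]; split => //; apply: (subsetP sHG).
Qed.

Lemma fibE G (W : {group gT * gT}) :
  W \subset setX G G -> diag G \subset W -> gval W = fib G (k1 W).
Proof.
move=> sW dW; apply/setP => -[a b]; rewrite /fib /k1 !inE /=.
have dg g : g \in G -> (g, g) \in W.
  by move=> Gg; apply: (subsetP dW); apply: imset_f.
apply/idP/and3P => [Wab | [Ga Gb Hab]].
  have := subsetP sW _ Wab; rewrite inE /= => /andP[Ga Gb]; split => //.
  by have := groupM Wab (dg _ (groupVr Gb)); rewrite pairM mulgV.
by have := groupM Hab (dg _ Gb); rewrite pairM mul1g mulgKV.
Qed.

Lemma k1_normal G (W : {group gT * gT}) :
  W \subset setX G G -> diag G \subset W -> k1 W <| G.
Proof.
move=> sW dW; apply/andP; split.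
  apply/subsetP => g; rewrite /k1 inE => /(subsetP sW); by rewrite inE => /andP[].
apply/subsetP => g Gg; rewrite inE; apply/subsetP => x /imsetP[n]; rewrite /k1 inE => Wn ->.
have Wg : (g, g) \in W by apply: (subsetP dW); apply: imset_f.
rewrite inE; have := groupJ Wn Wg; by rewrite pairJ conj1g.
Qed.


Lemma p1_fib G H : p1 (fib G H) = G.
Proof.
apply/setP => g; rewrite /p1 /fib inE; apply/existsP/idP => [[h]|Gg].
  by rewrite inE /= => /and3P[].
by exists g; rewrite inE /= Gg mulgV group1.
Qed.

Lemma p2_fib G H : p2 (fib G H) = G.
Proof.
apply/setP => g; rewrite /p2 /fib inE; apply/existsP/idP => [[h]|Gg].
  by rewrite inE /= => /and3P[].
by exists g; rewrite inE /= Gg mulgV group1.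
Qed.

Lemma astp_fib G N M : N <| G -> M <| G ->
  astp (fib G N) (fib G M) = fib G (N <*> M).
Proof.
move=> /andP[sNG nNG] /andP[sMG nMG].
have jE : N <*> M = N * M by rewrite norm_joinEr // (subset_trans sMG nNG).
rewrite jE /astp !p1_fib !p2_fib; apply/setP => -[u v]; rewrite /fib !inE /=.
apply/and3P/and3P => [[Gu Gv /existsP[x]] | [Gu Gv]].
  rewrite !inE /= => /and3P[/andP[Gx _] /and3P[_ _ Hux] /and3P[_ _ Hxv]].
  split => //; have -> : u * v^-1 = (u * x^-1) * (x * v^-1) by rewrite !mulgA mulgKV.
  exact: mem_mulg.
case/mulsgP => n m Nn Mm E; split => //; apply/existsP; exists (n^-1 * u).
have Gn : n \in G by apply: (subsetP sNG).
have Gx : n^-1 * u \in G by rewrite groupM ?groupV.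
rewrite !inE /= Gx Gu Gv /= invMg invgK mulgA mulgV mul1g Nn /=.
by rewrite -mulgA E mulgA mulVg mul1g.
Qed.


Lemma der_fib G H : H <| G ->
  k1 ((fib G H)^`(1)) = [~: H, G] /\ k2 ((fib G H)^`(1)) = [~: H, G].
Proof.
move=> /andP[sHG nHG].
pose W := Group (fib_group_set nHG).
change (k1 (W^`(1)) = [~: H, G] /\ k2 (W^`(1)) = [~: H, G]).
set K := [~: H, G].
have nKG : G \subset 'N(K) by rewrite normsRr.
have sKH : K \subset H by rewrite commg_subl.
have memW a b : ((a, b) \in W) = [&& a \in G, b \in G & a * b^-1 \in H].
  by rewrite /= /fib inE.
have claim : forall w, w \in W^`(1) -> w.1 * w.2^-1 \in K.
  pose f := fun w : gT * gT => coset K (w.1 * w.2^-1).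
  have fM : {in W &, {morph f : x y / x * y}}.
    move=> [a b] [c d]; rewrite !memW => /and3P[Ga Gb Hab] /and3P[Gc Gd Hcd].
    rewrite /f pairM /=.
    have -> : a * c * (b * d)^-1 = (a * b^-1) * ((c * d^-1) * [~ c * d^-1, b^-1]).
      by rewrite -conjg_mulR /conjg invgK invMg !mulgA mulgKV.
    have Gcd : c * d^-1 \in G by rewrite groupM ?groupV.
    rewrite mulgA coset_kerr ?mem_commg ?groupV // morphM //.
      by apply: (subsetP nKG); rewrite groupM ?groupV.
    exact: (subsetP nKG).
  pose fm := Morphism fM.
  have sfW : fm @* W \subset H / K.
    apply/subsetP => y /morphimP[[a b] _]; rewrite memW => /and3P[_ _ Hab] ->.
    exact: mem_quotient.
  have abHK : abelian (H / K) by apply: sub_der1_abelian; rewrite commgS.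
  have triv : fm @* W^`(1) = 1.
    by rewrite morphim_der //; apply/derG1P; apply: abelianS abHK.
  move=> w Ww'; have Ww : w \in W by apply: (subsetP (der1_subG W)).
  have := mem_morphim fm Ww Ww'; rewrite triv inE => /eqP fw1.
  case: w Ww Ww' fw1 => a b; rewrite memW => /and3P[Ga Gb _] _ fw1.
  by apply: coset_idr fw1; apply: (subsetP nKG); rewrite groupM ?groupV.
have sub1 : K \subset k1 (W^`(1)).
  rewrite /K /commutator (@gen_subG _ _ (k1_group (W^`(1))%G)); apply/subsetP => _ /imset2P[n g Hn Gg ->].
  rewrite /k1 inE; have -> : ([~ n, g], 1) = [~ (n, 1), (g, g)] by rewrite pairR comm1g.
  have Gn := subsetP sHG _ Hn.
  by apply: mem_commg; rewrite memW ?invg1 ?mulg1 ?mulgV ?Gn ?Gg ?group1 ?Hn.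
have sub2 : K \subset k2 (W^`(1)).
  rewrite /K /commutator (@gen_subG _ _ (k2_group (W^`(1))%G)); apply/subsetP => _ /imset2P[n g Hn Gg ->].
  rewrite /k2 inE; have -> : (1, [~ n, g]) = [~ (1, n), (g, g)] by rewrite pairR comm1g.
  have Gn := subsetP sHG _ Hn.
  by apply: mem_commg; rewrite memW ?mul1g ?groupV ?mulgV ?Gn ?Gg ?group1 ?Hn.
split; apply/eqP; rewrite eqEsubset ?sub1 ?sub2 andbT; apply/subsetP => g.
  by rewrite /k1 inE => /claim /=; rewrite invg1 mulg1.
by rewrite /k2 inE => /claim /=; rewrite mul1g groupV.
Qed.


Lemma iso_aux G N M : N <| G -> M <| G ->
  [~: N <*> M, G] / (N :&: [~: N <*> M, G])
    \isog [~: M, G] / (N :&: [~: M, G]).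
Proof.
move=> /andP[sNG nNG] /andP[sMG nMG].
have jE : N <*> M = N * M by rewrite norm_joinEr // (subset_trans sMG nNG).
have sAN : [~: N, G] \subset N by rewrite commg_subl.
have sBM : [~: M, G] \subset M by rewrite commg_subl.
have sXG : [~: N <*> M, G] \subset G.
  by rewrite commg_subr (subset_trans _ (normG G)) // join_subG sNG sMG.
have sBG : [~: M, G] \subset G := subset_trans sBM sMG.
have XE : [~: N <*> M, G] :=: [~: N, G] * [~: M, G].
  by rewrite jE commMG // normsRr.
apply: isog_trans (second_isog (subset_trans sXG nNG)) _.
rewrite isog_sym; apply: isog_trans (second_isog (subset_trans sBG nNG)) _.
have -> : ([~: N <*> M, G] / N)%G = ([~: M, G] / N)%G.
  apply: val_inj => /=; rewrite -quotientMidr XE -mulgA (normC (A := [~: M, G]) (B := N)).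
    by rewrite mulgA (mulSGid sAN) quotientMidl.
  exact: subset_trans sBG nNG.
exact: isog_refl.
Qed.

End Aux.

Theorem lemma5p5 (gT : finGroupType) (G : {group gT}) (U V : {group gT * gT}) :
  U \subset setX G G -> V \subset setX G G ->
  diag G \subset U -> diag G \subset V ->
  (k1 ((astp U V)^`(1)) / (k1 U :&: k1 ((astp U V)^`(1)))
     \isog k1 (V^`(1)) / (k2 U :&: k1 (V^`(1))))
  /\
  (k2 ((astp U V)^`(1)) / (k2 V :&: k2 ((astp U V)^`(1)))
     \isog k2 (U^`(1)) / (k1 V :&: k2 (U^`(1)))).
Proof.
move=> sU sV dU dV.
have nN := k1_normal sU dU; have nM := k1_normal sV dV.
have sNG := normal_sub nN; have sMG := normal_sub nM.
rewrite (fibE sU dU) (fibE sV dV).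
move: (k1_group U) (k1_group V) nN nM sNG sMG => N M nN nM sNG sMG.
rewrite astp_fib // !k1_fib ?k2_fib //.
have [d1 d2] := der_fib (normalY nN nM).
have [e1 e2] := der_fib nN; have [f1 f2] := der_fib nM.
rewrite d1 d2 e2 f1; split; first exact: iso_aux.
have E : (k1_group U <*> k1_group V)%G = (k1_group V <*> k1_group U)%G.
  by apply: val_inj; rewrite /= joingC.
by rewrite E; apply: iso_aux.
Qed.
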